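(* Every connected threshold graph on $n\geq 2$ vertices is isomorphic to an induced subgraph of the anti-regular graph $A_{2n-2}$. More precisely, let $G$ be a connected threshold graph with binary string $b=0^{s_1}1^{t_1}\cdots 0^{s_k}1^{t_k}$ (all $s_i,t_i\geq 1$) and $n=\sum_{i=1}^k(s_i+t_i)$ vertices. Let $N=2(n-k)$ if $s_1=1$ and $N=2(n-k)-1$ if $s_1\geq 2$. Then $G$ is an induced subgraph of $A_N$, and $A_N$ is the smallest anti-regular graph containing $G$ as an induced subgraph.
   Context: Threshold graphs from binary strings: given $b=b_1b_2\cdots b_n\in\{0,1\}^n$ with $b_1=0$, let $G_1$ be a single vertex, and for $j=2,\ldots,n$ obtain $G_j$ from $G_{j-1}$ by adding a new vertex which is adjacent to all previous vertices if $b_j=1$ and isolated if $b_j=0$; $G(b)=G_n$ and $b$ is called the binary string of $G(b)$. $G(b)$ is connected iff $b_n=1$. The notation $0^{s}$ (resp. $1^t$) denotes $s$ consecutive zeros (resp. $t$ consecutive ones). The anti-regular graph $A_m$ is $G(b)$ with $b=0101\cdots01$ (length $m$) when $m$ is even and $b=00101\cdots01$ (length $m$) when $m$ is odd. *)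

(* Defs.v *)
From mathcomp Require Import all_boot.
Set Implicit Arguments. Unset Strict Implicit. Unset Printing Implicit Defensive.

(* A binary string b = b_1 ... b_n is a [seq bool] (true = 1, false = 0),
   0-indexed: b_j (1-indexed) is [nth false b (j-1)].
   The threshold graph G(b) has vertex set 'I_(size b); vertex j (added at
   step j) is adjacent to all earlier vertices iff b_j = 1. Hence for i <> j,
   i ~ j iff the later of the two vertices has bit 1. *)
Definition tadj (b : seq bool) (i j : 'I_(size b)) : bool :=
  (i != j) && nth false b (maxn i j).

Definition induced_sub (b c : seq bool) : Prop :=
  exists f : 'I_(size b) -> 'I_(size c),
    injective f /\ forall i j, tadj i j = tadj (f i) (f j).

Definition antireg_str (m : nat) : seq bool :=
  if ~~ odd m then [seq odd i | i <- iota 0 m]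
  else false :: [seq odd i | i <- iota 0 m.-1].

Definition block_str (s t : seq nat) : seq bool :=
  flatten [seq nseq x.1 false ++ nseq x.2 true | x <- zip s t].

(* Main.v *)
Require Import Defs.
From mathcomp Require Import all_boot zify.
Set Implicit Arguments. Unset Strict Implicit. Unset Printing Implicit Defensive.

Definition rho (b : seq bool) (j : nat) : nat :=
  \sum_(1 <= i < j) (nth false b i != nth false b i.+1 : nat).

Lemma rhoS b j : rho b j.+1 = rho b j + ((0 < j) && (nth false b j != nth false b j.+1)).
Proof.
case: j => [|j]; first by rewrite /rho !big_geq.
by rewrite /rho big_nat_recr.
Qed.

Lemma rho_mono b i d : rho b i <= rho b (i + d).
Proof. elim: d => [|d IH]; first by rewrite addn0. rewrite addnS rhoS; lia. Qed.

Lemma rho_le b j : rho b j <= j.-1.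
Proof.
elim: j => [|j IH]; first by rewrite /rho big_geq.
rewrite rhoS; case: j IH => [|j] /= IH; first by rewrite /rho big_geq.
case: (_ != _) => /=; lia.
Qed.

Lemma rho_const b x d : 0 < x -> rho b (x + d) = rho b x ->
  nth false b x = nth false b (x + d).
Proof.
move=> x0; elim: d => [|d IH]; first by rewrite addn0.
rewrite addnS rhoS => e.
have m := rho_mono b x d.
have e1 : rho b (x + d) = rho b x by move: e; case: (_ && _) => /=; lia.
rewrite IH //. move: e; rewrite e1; case E: (nth false b (x + d) != _) => /=.
- have -> : 0 < x + d by lia. lia.
- by move/negbFE/eqP: E.
Qed.

Lemma antiregE M p : nth false (antireg_str M) p = (0 < p < M) && odd (p + M).
Proof.
rewrite /antireg_str; case: (boolP (odd M)) => oM /=.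
- case: p => [|p] //=.
  case: (ltnP p M.-1) => h.
  + rewrite (nth_map 0) ?size_iota // nth_iota // add0n.
    have -> : p.+1 < M by lia.
    rewrite /= oddD /= oM; by case: (odd p).
  + rewrite nth_default ?size_map ?size_iota //.
    by have -> : p.+1 < M = false by lia.
- case: (ltnP p M) => h.
  + rewrite (nth_map 0) ?size_iota // nth_iota // add0n oddD (negbTE oM) addbF.
    by case: p h => [|p] //= ->.
  + rewrite nth_default ?size_map ?size_iota //.
    by rewrite andbF.
Qed.

Lemma size_antireg M : size (antireg_str M) = M.
Proof.
rewrite /antireg_str; case: (boolP (odd M)) => oM /=.
- rewrite size_map size_iota; by case: M oM.
- by rewrite size_map size_iota.
Qed.

Lemma tadjA M (p q : 'I_(size (antireg_str M))) :
  tadj p q = (nat_of_ord p != nat_of_ord q) && (0 < maxn p q) && odd (maxn p q + M).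
Proof.
rewrite /tadj antiregE.
have hp : (p < M)%N by rewrite -{2}(size_antireg M).
have hq : (q < M)%N by rewrite -{2}(size_antireg M).
have -> : maxn p q < M by rewrite gtn_max hp hq.
by rewrite andbT andbA.
Qed.
Lemma embed b M (F : nat -> nat) :
  (forall j, j.+1 < size b -> F j < F j.+1) ->
  (0 < size b -> F (size b).-1 < M) ->
  (forall j, 0 < j < size b -> odd (F j + M) = nth false b j) ->
  induced_sub b (antireg_str M).
Proof.
move=> mono bnd par.
have lt : forall i d, i + d.+1 < size b -> F i < F (i + d.+1).
  move=> i; elim=> [|d IH] h; first by rewrite addn1 mono // -addn1.
  apply: (ltn_trans (IH _)); first lia.
  rewrite (addnS i d.+1); apply: mono; lia.
have lt' : forall i j, i < j -> j < size b -> F i < F j.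
  move=> i j ij js; have := lt i (j - i).-1; have -> : i + (j - i).-1.+1 = j by lia.
  by apply.
have FM : forall i : 'I_(size b), F i < size (antireg_str M).
  move=> i; rewrite size_antireg.
  have i0 : 0 < size b by apply: (leq_ltn_trans _ (ltn_ord i)).
  case: (ltnP i (size b).-1) => h.
    apply: ltn_trans (lt' _ _ h _) (bnd i0); lia.
  have -> : nat_of_ord i = (size b).-1 by have := ltn_ord i; lia.
  exact: bnd.
exists (fun i => Ordinal (FM i)); split.
  move=> i j /(congr1 val) /= e; apply/val_inj => /=.
  case: (ltngtP i j) => // h.
    by have := lt' _ _ h (ltn_ord j); rewrite e ltnn.
  by have := lt' _ _ h (ltn_ord i); rewrite e ltnn.
move=> i j; rewrite tadjA /tadj /=.
case: (ltngtP i j) => h.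
- have ltF := lt' _ _ h (ltn_ord j).
  have -> : maxn (F i) (F j) = F j by apply/maxn_idPr; lia.
  have -> : (F i != F j) = true by apply/eqP; lia.
  have -> : (i != j) = true by apply/eqP => e; move: h; rewrite e ltnn.
  have -> : 0 < F j by lia.
  rewrite par //; apply/andP; split; [lia | exact: ltn_ord].
- have ltF := lt' _ _ h (ltn_ord i).
  have -> : maxn (F i) (F j) = F i by apply/maxn_idPl; lia.
  have -> : (F i != F j) = true by apply/eqP; lia.
  have -> : (i != j) = true by apply/eqP => e; move: h; rewrite e ltnn.
  have -> : 0 < F i by lia.
  rewrite par //; apply/andP; split; [lia | exact: ltn_ord].
- have e : i = j by apply: val_inj.
  by subst j; rewrite !eqxx.
Qed.

Lemma part1 b : 2 <= size b -> last false b = true ->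
  induced_sub b (antireg_str (2 * size b - 2)).
Proof.
move=> n2 lb.
apply: (@embed _ _ (fun j => 2 * j - nth false b j)).
- move=> j _; case: (nth false b j); case: (nth false b j.+1) => /=; lia.
- move=> _; rewrite nth_last lb /=; lia.
- move=> j /andP [j0 jn]; case: (nth false b j).
  + have -> : 2 * j - true + (2 * size b - 2) = (2 * (j + size b - 2)).+1 by simpl; lia.
    by rewrite /= mul2n odd_double.
  + have -> : 2 * j - false + (2 * size b - 2) = 2 * (j + size b - 1) by simpl; lia.
    by rewrite mul2n odd_double.
Qed.

Lemma upper b : 2 <= size b -> last false b = true ->
  induced_sub b (antireg_str ((2 * size b).-2 - rho b (size b).-1)).
Proof.
move=> n2 lb.
set N := (2 * size b).-2 - rho b (size b).-1.
pose F j := (2 * j).-1 - rho b j.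
have step : forall j, 0 < j -> F j.+1 + ((nth false b j != nth false b j.+1) : nat) = F j + 2.
  move=> j j0; rewrite /F rhoS j0 /=; have := rho_le b j.
  case: (_ != _) => /=; lia.
have rl := rho_le b (size b).-1.
have Qn : odd (F (size b).-1 + N) = nth false b (size b).-1.
  rewrite nth_last lb /F /N.
  have -> : (2 * (size b).-1).-1 - rho b (size b).-1 + ((2 * size b).-2 - rho b (size b).-1)
     = (2 * (2 * size b - 3 - rho b (size b).-1)).+1 by lia.
  by rewrite /= mul2n odd_double.
have Q : forall d j, 0 < j -> j + d = (size b).-1 -> odd (F j + N) = nth false b j.
  elim=> [|d IH] j j0 e; first by rewrite -e addn0 in Qn.
  have := IH j.+1 isT; rewrite addSnnS => /(_ e).
  have e2 : F j + N + 2 = (F j.+1 + N) + ((nth false b j != nth false b j.+1) : nat).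
    have := step j j0; lia.
  have -> : odd (F j + N) = odd (F j + N + 2) by rewrite (oddD _ 2) addbF.
  move=> IH1; rewrite e2 oddD oddb IH1.
  by case: (nth false b j); case: (nth false b j.+1).
apply: (@embed _ _ F).
- move=> j _; rewrite /F rhoS; have := rho_le b j; case: j => [|j] /=.
    rewrite /rho big_geq //.
  case: (_ != _) => /=; lia.
- move=> _; rewrite /F /N; lia.
- move=> j /andP [j0 jn]; apply: (Q ((size b).-1 - j)) => //; lia.
Qed.

Lemma count_bound M (S : seq nat) : uniq S -> all (fun p => p < M) S ->
  2 * size S <= M.+1 + count (fun p => p \in map succn S) S.
Proof.
move=> uS aS.
set L := map succn S ++ filter (predC (fun p => p \in map succn S)) S.
have uL : uniq L.
  rewrite cat_uniq map_inj_uniq ?uS ?filter_uniq //=; last by move=> ? ? [].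
  rewrite andbT.
  by apply/hasPn => x; rewrite mem_filter => /andP [h _].
have sL : {subset L <= iota 0 M.+1}.
  move=> x; rewrite mem_cat mem_iota add0n /=.
  case/orP => [/mapP [y yS ->] | ]; first by rewrite ltnS (allP aS).
  by rewrite mem_filter => /andP [_ xS]; apply: ltnW; rewrite ltnS (allP aS).
have := uniq_leq_size uL sL.
rewrite size_iota size_cat size_map size_filter.
have := count_predC (fun p => p \in map succn S) S.
move=> h1 h2.
set c1 := count (fun p => p \in map succn S) S in h1 *.
set c2 := count _ S in h1 h2.
have e : @size (Equality.sort nat) S = @size nat S by [].
rewrite e in h1.
lia.
Qed.

Lemma twin_lemma b (u v : 'I_(size b)) : u != v -> rho b u = rho b v ->
  forall w, w != u -> w != v -> tadj u w = tadj v w.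
Proof.
move=> uv e w wu wv.
wlog: u v uv e wu wv / (u < v)%N.
  move=> H; case: (ltngtP u v) => h; first by apply: H.
    by rewrite (H v u) // eq_sym.
  by move/val_inj: h => h; rewrite h eqxx in uv.
move=> lt.
have cst : forall x, 0 < x -> u <= x <= v -> nth false b x = nth false b v.
  move=> x x0 /andP [ux xv].
  have h1 : u + (x - u) = x by lia.
  have h2 : x + (v - x) = v by lia.
  have e1 : rho b x = rho b v.
    have := rho_mono b u (x - u); have := rho_mono b x (v - x).
    rewrite h1 h2; lia.
  have := rho_const (b := b) x0 (d := v - x); rewrite h2 e1 => ->; done.
rewrite /tadj eq_sym wu eq_sym wv /=.
have wu' : nat_of_ord w != u by [].
have wv' : nat_of_ord w != v by [].
have mx : forall x y : nat, maxn x y = if x < y then y else x.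
  move=> x y; case: ltnP => h; apply/eqP; rewrite ?eqn_leq ?geq_max ?leq_maxr ?leq_maxl //= ?leqnn ?andbT; lia.
rewrite !mx.
case: (ltnP v w) => h.
  by have -> : u < w by lia.
case: (ltnP u w) => h'.
  apply: cst; lia.
apply: cst; lia.
Qed.

Lemma lower b M : induced_sub b (antireg_str M) ->
  2 * size b <= M + 2 + rho b (size b).-1.
Proof.
move=> [f [finj fadj]].
have posinj : injective (fun u => nat_of_ord (f u)) by move=> u v /val_inj /finj.
pose pt (u : 'I_(size b)) :=
  nat_of_ord (f u) \in map (fun v => (nat_of_ord (f v)).+1) (enum 'I_(size b)).
have cnt : 2 * size b <= M.+1 + count pt (enum 'I_(size b)).
  have := @count_bound M (map (fun u => nat_of_ord (f u)) (enum 'I_(size b))).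
  rewrite map_inj_uniq // enum_uniq size_map size_enum_ord count_map -map_comp.
  apply => //; apply/allP => x /mapP [u _ ->].
  by rewrite -{2}(size_antireg M).
have key : forall u v, f u < f v -> pt u -> pt v ->
    exists w, [/\ w != u, w != v & tadj u w != tadj v w].
  move=> u v lt /mapP [u' _ eu] /mapP [v' _ ev].
  have ne : forall x y, nat_of_ord (f x) != f y -> x != y.
    by move=> x y; apply: contraNneq => ->.
  case E: (odd (f u + M) == odd (f v + M)).
  - have vu : v' != u.
      apply/eqP => e'; subst v'; move: E; rewrite ev addSn /=.
      by case: (odd (f u + M)).
    have lt2 : f u < f v'.
      have : nat_of_ord (f v') != f u by apply/eqP => /posinj h; rewrite h eqxx in vu.
      lia.
    exists v'; split => //.
      by apply: ne; rewrite ev; apply/eqP; lia.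
    rewrite 2!fadj !tadjA.
    have -> : maxn (f u) (f v') = f v' by apply/maxn_idPr; lia.
    have -> : maxn (f v) (f v') = f v by apply/maxn_idPl; lia.
    have -> : (nat_of_ord (f u) != f v') = true by apply/eqP; lia.
    have -> : (nat_of_ord (f v) != f v') = true by apply/eqP; lia.
    have -> : (0 < f v') = true by lia.
    have -> : (0 < f v) = true by lia.
    rewrite /= ev addSn /=.
    by case: (odd (f v' + M)).
  - exists u'; split.
    + by apply: ne; rewrite eu; apply/eqP; lia.
    + by apply: ne; apply/eqP; lia.
    rewrite 2!fadj !tadjA.
    have -> : maxn (f u) (f u') = f u by apply/maxn_idPl; lia.
    have -> : maxn (f v) (f u') = f v by apply/maxn_idPl; lia.
    have -> : (nat_of_ord (f u) != f u') = true by apply/eqP; lia.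
    have -> : (nat_of_ord (f v) != f u') = true by apply/eqP; lia.
    have -> : (0 < f u) = true by lia.
    have -> : (0 < f v) = true by lia.
    by rewrite /= E.
have nontwin : forall u v, u != v -> pt u -> pt v ->
    exists w, [/\ w != u, w != v & tadj u w != tadj v w].
  move=> u v uv pu pv.
  have : nat_of_ord (f u) != f v by apply/eqP => /posinj h; rewrite h eqxx in uv.
  case: ltngtP => // h _; first exact: key.
  have [w [h1 h2 h3]] := key v u h pv pu.
  by exists w; split; rewrite // eq_sym.
have pig : count pt (enum 'I_(size b)) <= (rho b (size b).-1).+1.
  rewrite -size_filter.
  have := @uniq_leq_size _ (map (fun u : 'I_(size b) => rho b u) (filter pt (enum 'I_(size b))))
     (iota 0 (rho b (size b).-1).+1).
  rewrite size_map size_iota; apply.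
  - rewrite map_inj_in_uniq; first by apply: filter_uniq; apply: enum_uniq.
    move=> u v; rewrite !mem_filter => /andP [pu _] /andP [pv _] e.
    apply/eqP; apply/negPn/negP => uv.
    have [w [wu wv]] := nontwin u v uv pu pv.
    by rewrite (twin_lemma uv e wu wv) eqxx.
  - move=> x /mapP [u _ ->]; rewrite mem_iota /= add0n ltnS.
    have := rho_mono b u ((size b).-1 - u); have := ltn_ord u => h.
    by have -> : u + ((size b).-1 - u) = (size b).-1 by lia.
lia.
Qed.

Definition ch (l : seq bool) : nat :=
  \sum_(0 <= i < (size l).-1) (nth false l i != nth false l i.+1 : nat).

Lemma ch0 : ch [::] = 0. Proof. by rewrite /ch big_geq. Qed.
Lemma ch1 x : ch [:: x] = 0. Proof. by rewrite /ch big_geq. Qed.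
Lemma chE x y l : ch [:: x, y & l] = (x != y) + ch (y :: l).
Proof. by rewrite /ch /= big_ltn // big_add1. Qed.

Lemma ch_nseq x c l : ch (nseq x.+1 c ++ l) = ch (c :: l).
Proof.
elim: x => [|x IH] //.
by rewrite [nseq _ _ ++ _]/= chE eqxx add0n.
Qed.

Lemma rho_ch b : rho b (size b).-1 = ch (behead b).
Proof.
rewrite /rho /ch size_behead; case: b => [|x l] /=; first by rewrite !big_geq.
by rewrite big_add1.
Qed.

Lemma block_cons x s y t :
  block_str (x :: s) (y :: t) = nseq x false ++ nseq y true ++ block_str s t.
Proof. by rewrite /block_str /= catA. Qed.

Lemma size_block s t : size s = size t ->
  size (block_str s t) = sumn s + sumn t.
Proof.
elim: s t => [|x s IH] [|y t] //= [e].
rewrite block_cons !size_cat !size_nseq IH //; lia.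
Qed.

Lemma sumn_pos s : all (fun x => 0 < x) s -> size s <= sumn s.
Proof. elim: s => [|x s IH] //= /andP [x0 /IH]; lia. Qed.

Lemma last_block s t : size s = size t -> 0 < size s ->
  all (fun x => 0 < x) t -> forall d, last d (block_str s t) = true.
Proof.
elim: s t => [|x s IH] [|y t] //= [e] _ /andP [y0 pt] d.
rewrite block_cons !last_cat.
case: s t e IH pt => [|x' s] [|y' t] //= e IH pt.
  case: y y0 => [|y] //= _.
  by elim: y.
by rewrite IH.
Qed.

Lemma ch_true_block s t : size s = size t ->
  all (fun x => 0 < x) s -> all (fun x => 0 < x) t ->
  ch (true :: block_str s t) = 2 * size s.
Proof.
elim: s t => [|x s IH] [|y t] //=; first by rewrite /block_str /= ch1.
move=> [e] /andP [x0 ps] /andP [y0 pt].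
case: x x0 => [|x] // _; case: y y0 => [|y] // _.
rewrite block_cons [nseq x.+1 false ++ _]/= chE /= -cat_cons ch_nseq chE /=.
rewrite -cat_cons ch_nseq IH //; lia.
Qed.

Lemma ch_behead_block s t : size s = size t -> 0 < size s ->
  all (fun x => 0 < x) s -> all (fun x => 0 < x) t ->
  ch (behead (block_str s t)) = if head 0 s == 1 then 2 * size s - 2 else 2 * size s - 1.
Proof.
case: s t => [|x s] [|y t] //= [e] _ /andP [x0 ps] /andP [y0 pt].
case: x x0 => [|[|x]] // _; case: y y0 => [|y] // _; rewrite block_cons /=.
  rewrite ch_nseq ch_true_block //; lia.
rewrite ch_nseq chE /= -cat_cons ch_nseq ch_true_block //; lia.
Qed.

Theorem theorem3p1 :
  (* every connected threshold graph on n >= 2 vertices embeds in A_{2n-2} *)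
  (forall b : seq bool,
      2 <= size b -> nth false b 0 = false -> last false b = true ->
      induced_sub b (antireg_str (2 * size b - 2)))
  /\
  (* refined version with the block decomposition *)
  (forall s t : seq nat,
      size s = size t -> 0 < size s ->
      all (fun x => 0 < x) s -> all (fun x => 0 < x) t ->
      let b := block_str s t in
      let n := sumn s + sumn t in
      let k := size s in
      let N := if head 0 s == 1 then 2 * (n - k) else 2 * (n - k) - 1 in
      induced_sub b (antireg_str N) /\
      (forall M : nat, induced_sub b (antireg_str M) -> N <= M)).
Proof.
split.
  by move=> b n2 _ lb; apply: part1.
move=> s t st s0 ps pt b n k N.
have sb : size b = n by rewrite /b size_block.
have lb : last false b = true by rewrite /b last_block.
have kn : 2 * k <= n.
  have := sumn_pos ps; have := sumn_pos pt; rewrite /n /k -st; lia.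
have R : rho b (size b).-1 = if head 0 s == 1 then 2 * k - 2 else 2 * k - 1.
  by rewrite rho_ch /b ch_behead_block.
have eN : N = (2 * size b).-2 - rho b (size b).-1.
  rewrite R sb /N; case: (head 0 s == 1); lia.
have n2 : 2 <= size b by rewrite sb; move: s0; rewrite -/k; lia.
split; first by rewrite eN; apply: upper.
by move=> M /lower; rewrite eN; lia.
Qed.
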